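(* Let $(\mathbf k((G)),l)$ be a series field with prelogarithmic section and let $\psi$ be a morphism from $(\mathbf k((G)),l)$ to itself which is contracting, i.e. $\psi(g)<g$ for all $g\in G$ with $g>1$. Then $\psi^{EL}$ is a contraction, i.e. $\psi^{EL}(g)<g$ for all $g\in G^{EL}$ with $g>1$.
   Context: Let $\mathbf k$ be an ordered field and $(G,\cdot,<)$ a totally ordered abelian group (written multiplicatively). $\mathbf k((G))$ denotes the field of generalized power series $\alpha=\sum_{g\in G}\alpha(g)\,g$ ($\alpha(g)\in\mathbf k$) whose support is anti-well-ordered, with the usual operations, canonical valuation $v(\alpha)=\max\operatorname{supp}\alpha$ and ordering $\alpha>0$ iff $\alpha(v(\alpha))>0$; $\mathbf k$ and $G$ are identified with subsets of $\mathbf k((G))$. For $S\subseteq G$, $\mathbf k((S))=\{\alpha:\operatorname{supp}\alpha\subseteq S\}$; $G^{>1}=\{g\in G:g>1\}$. A prelogarithmic section is an order-preserving group embedding $l:(G,\cdot)\to(\mathbf k((G^{>1})),+)$; fix an order-preserving group isomorphism $\log:\mathbf k^{>0}\to\mathbf k$. Exponential extension: $G^\#$ is the ordered abelian group of formal symbols $e(\alpha)$, $\alpha\in\mathbf k((G^{>1}))$, with $e(\alpha)e(\beta)=e(\alpha+\beta)$, $e(\alpha)<e(\beta)\iff\alpha<\beta$, and $e(l(g))$ identified with $g\in G$; $l^\#(e(\alpha))=\alpha$ is a prelogarithmic section of $\mathbf k((G^\#))$ extending $l$. Iterating gives $G^{\#n}$, $l^{\#n}$; $\mathbf k((G))^{EL}=\bigcup_n\mathbf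 k((G^{\#n}))$ with logarithm $\mathrm{Log}$ (union of the prelogarithms of the $l^{\#n}$), $G^{EL}=\bigcup_nG^{\#n}$. An order-preserving group embedding $\psi:G\to G$, extended to $\mathbf k((G))$ by $\psi(\sum a_gg)=\sum a_g\psi(g)$, is a morphism of $(\mathbf k((G)),l)$ to itself if $\psi\circ l=l\circ\psi$ on $G$. It induces $\psi^\#=(l^\#)^{-1}\circ\psi\circ l^\#:G^\#\to G^\#$ (a morphism extending $\psi$); iterating gives $\psi^{\#n}$ and $\psi^{EL}=\bigcup_n\psi^{\#n}$. *)

(* Defs.v *)
From HB Require Import structures.
From mathcomp Require Import all_boot all_order all_algebra.
From Stdlib Require Import ClassicalEpsilon.
Import Order.TTheory GRing.Theory Num.Theory.
Local Open Scope ring_scope.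

(* A (candidate) ordered abelian group, written multiplicatively, given as a
   carrier type with a membership predicate [ogmem] (the group is the set of
   members), a product, a unit and a strict order. *)
Record PreOG := {
  car : Type;
  ogmem : car -> Prop;
  gmul : car -> car -> car;
  gone : car;
  glt : car -> car -> Prop }.


Definition is_oag (G : PreOG) : Prop :=
  ogmem G (gone G) /\
  (forall x y, ogmem G x -> ogmem G y -> ogmem G (gmul G x y)) /\
  (forall x y z, ogmem G x -> ogmem G y -> ogmem G z ->
     gmul G x (gmul G y z) = gmul G (gmul G x y) z) /\
  (forall x y, ogmem G x -> ogmem G y -> gmul G x y = gmul G y x) /\
  (forall x, ogmem G x -> gmul G (gone G) x = x) /\
  (forall x, ogmem G x -> exists y, ogmem G y /\ gmul G x y = gone G) /\
  (forall x, ogmem G x -> ~ glt G x x) /\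
  (forall x y z, ogmem G x -> ogmem G y -> ogmem G z ->
     glt G x y -> glt G y z -> glt G x z) /\
  (forall x y, ogmem G x -> ogmem G y -> glt G x y \/ x = y \/ glt G y x) /\
  (forall x y z, ogmem G x -> ogmem G y -> ogmem G z ->
     glt G x y -> glt G (gmul G x z) (gmul G y z)).

Definition gt1 (G : PreOG) (g : car G) : Prop := ogmem G g /\ glt G (gone G) g.

Definition anti_wo (G : PreOG) (P : car G -> Prop) : Prop :=
  forall Q : car G -> Prop, (forall x, Q x -> P x) -> (exists x, Q x) ->
  exists m, Q m /\ forall x, Q x -> ~ glt G m x.

(* a : G -> k is an element of k((S)): anti-well-ordered support inside S. *)
Definition is_series {k : realFieldType} (G : PreOG) (S : car G -> Prop)
  (a : car G -> k) : Prop :=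
  (forall g, a g <> 0 -> S g) /\ anti_wo G (fun g => a g <> 0).

(* Order of k((G)): a < b iff the leading coefficient of b - a is positive,
   i.e. b - a has coefficient > 0 at some g and vanishes above g. *)
Definition series_lt {k : realFieldType} (G : PreOG) (a b : car G -> k) : Prop :=
  exists g, ogmem G g /\ (a g < b g) /\
    forall h, ogmem G h -> glt G g h -> a h = b h.

(* Push-forward of a series along a map f injective on the members:
   sum a_x x  |->  sum a_x f(x). *)
Definition push {k : realFieldType} {A B : Type} (mA : A -> Prop) (f : A -> B)
  (a : A -> k) (y : B) : k :=
  match excluded_middle_informative (exists x, mA x /\ f x = y) with
  | left H => a (proj1_sig (constructive_indefinite_description _ H))
  | right _ => 0
  end.

Definition ext {k : realFieldType} (G : PreOG) (psi : car G -> car G)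
  (a : car G -> k) : car G -> k := push (ogmem G) psi a.

Definition is_prelog {k : realFieldType} (G : PreOG) (l : car G -> car G -> k) : Prop :=
  (forall g, ogmem G g -> is_series G (gt1 G) (l g)) /\
  (forall g h, ogmem G g -> ogmem G h ->
     l (gmul G g h) = (fun x => l g x + l h x)) /\
  (forall g h, ogmem G g -> ogmem G h -> glt G g h -> series_lt G (l g) (l h)).

Definition is_og_embedding (G : PreOG) (psi : car G -> car G) : Prop :=
  (forall g, ogmem G g -> ogmem G (psi g)) /\
  (forall g h, ogmem G g -> ogmem G h -> psi (gmul G g h) = gmul G (psi g) (psi h)) /\
  (forall g h, ogmem G g -> ogmem G h -> glt G g h -> glt G (psi g) (psi h)).

Definition is_morphism {k : realFieldType} (G : PreOG) (l : car G -> car G -> k)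
  (psi : car G -> car G) : Prop :=
  is_og_embedding G psi /\
  (forall g, ogmem G g -> ext G psi (l g) = l (psi g)).

Definition contracting (G : PreOG) (psi : car G -> car G) : Prop :=
  forall g, ogmem G g -> glt G (gone G) g -> glt G (psi g) g.

(* G^#: the ordered group of symbols e(alpha), alpha in k((G^{>1})),
   represented by alpha itself: e(a) e(b) = e(a+b), e(a) < e(b) iff a < b. *)
Definition sharp_group (k : realFieldType) (G : PreOG) : PreOG :=
  {| car := car G -> k;
     ogmem := is_series G (gt1 G);
     gmul := fun a b x => a x + b x;
     gone := fun _ => 0;
     glt := series_lt G |}.

Record Lev (k : realFieldType) := { lvG : PreOG; lvl : car lvG -> car lvG -> k }.

(* (G, l) |-> (G^#, l^#); g in G is identified with e(l g), and
   l^#(e(alpha)) = alpha, viewed in k((G^#)) via this identification. *)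
Definition sharp {k : realFieldType} (L : Lev k) : Lev k :=
  {| lvG := sharp_group k (lvG k L);
     lvl := fun a => push (ogmem (lvG k L)) (@lvl k L) a |}.

Fixpoint tower {k : realFieldType} (G : PreOG) (l : car G -> car G -> k) (n : nat)
  : Lev k :=
  match n with
  | O => {| lvG := G; lvl := l |}
  | S m => sharp (tower G l m)
  end.

Fixpoint psi_n {k : realFieldType} (G : PreOG) (l : car G -> car G -> k)
  (psi : car G -> car G) (n : nat) : car (lvG k (tower G l n)) -> car (lvG k (tower G l n)) :=
  match n return car (lvG k (tower G l n)) -> car (lvG k (tower G l n)) with
  | O => psi
  | S m => fun a => push (ogmem (lvG k (tower G l m))) (psi_n G l psi m) a
  end.

(* Main.v *)
Require Import Defs.
From mathcomp Require Import all_boot all_order all_algebra.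
From Stdlib Require Import Classical ClassicalEpsilon FunctionalExtensionality.
Import Order.TTheory GRing.Theory Num.Theory.
Local Open Scope ring_scope.

Record Inv (H : PreOG) (p : car H -> car H) : Prop := {
  i_one : ogmem H (gone H);
  i_irr : forall x, ogmem H x -> ~ glt H x x;
  i_tr : forall x y z, ogmem H x -> ogmem H y -> ogmem H z ->
     glt H x y -> glt H y z -> glt H x z;
  i_tri : forall x y, ogmem H x -> ogmem H y -> glt H x y \/ x = y \/ glt H y x;
  i_mem : forall x, ogmem H x -> ogmem H (p x);
  i_mono : forall x y, ogmem H x -> ogmem H y -> glt H x y -> glt H (p x) (p y);
  i_p1 : p (gone H) = gone H;
  i_con : forall x, ogmem H x -> glt H (gone H) x -> glt H (p x) x }.
Arguments i_irr {H p} _ {x}. Arguments i_tr {H p} _ {x y z}. Arguments i_tri {H p} _ {x y}. Arguments i_mem {H p} _ x. Arguments i_mono {H p} _ {x y}. Arguments i_p1 {H p} _. Arguments i_one {H p} _. Arguments i_con {H p} _ {x}.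

Lemma push_cases (k : realFieldType) (A B : Type) (mA : A -> Prop) (f : A -> B) (y : B) :
  (exists x, mA x /\ f x = y /\ forall a : A -> k, push mA f a y = a x) \/
  ((~ exists x, mA x /\ f x = y) /\ forall a : A -> k, push mA f a y = 0).
Proof.
unfold push; destruct (excluded_middle_informative (exists x, mA x /\ f x = y)) as [E|E].
- left; exists (proj1_sig (constructive_indefinite_description _ E)).
  destruct (proj2_sig (constructive_indefinite_description _ E)) as [h1 h2].
  by split; [|split].
- by right; split.
Qed.

Arguments push_cases k {A B}.

Lemma union_awo (H : PreOG) (p : car H -> car H) (P1 P2 : car H -> Prop) :
  Inv H p -> (forall x, P1 x -> ogmem H x) -> (forall x, P2 x -> ogmem H x) ->
  anti_wo H P1 -> anti_wo H P2 -> anti_wo H (fun x => P1 x \/ P2 x).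
Proof.
move=> I M1 M2 A1 A2 Q HQ [x0 Qx0].
destruct (classic (exists x, Q x /\ P1 x)) as [E1|E1];
destruct (classic (exists x, Q x /\ P2 x)) as [E2|E2].
- have [m1 [[Qm1 Pm1] Mx1]] := A1 (fun x => Q x /\ P1 x) (fun x h => proj2 h) E1.
  have [m2 [[Qm2 Pm2] Mx2]] := A2 (fun x => Q x /\ P2 x) (fun x h => proj2 h) E2.
  have Mm1 := M1 _ Pm1; have Mm2 := M2 _ Pm2.
  destruct (i_tri I Mm1 Mm2) as [L|[L|L]].
  + exists m2; split => // x Qx Lx.
    destruct (HQ x Qx) as [P|P].
    * by apply: (Mx1 x (conj Qx P)); apply: (i_tr I Mm1 Mm2 (M1 _ P)).
    * by apply: (Mx2 x (conj Qx P)).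
  + subst m2; exists m1; split => // x Qx Lx.
    destruct (HQ x Qx) as [P|P].
    * by apply: (Mx1 x (conj Qx P)).
    * by apply: (Mx2 x (conj Qx P)).
  + exists m1; split => // x Qx Lx.
    destruct (HQ x Qx) as [P|P].
    * by apply: (Mx1 x (conj Qx P)).
    * by apply: (Mx2 x (conj Qx P)); apply: (i_tr I Mm2 Mm1 (M2 _ P)).
- have [m1 [[Qm1 Pm1] Mx1]] := A1 (fun x => Q x /\ P1 x) (fun x h => proj2 h) E1.
  exists m1; split => // x Qx Lx.
  destruct (HQ x Qx) as [P|P]; first by apply: (Mx1 x (conj Qx P)).
  by apply: E2; exists x.
- have [m2 [[Qm2 Pm2] Mx2]] := A2 (fun x => Q x /\ P2 x) (fun x h => proj2 h) E2.
  exists m2; split => // x Qx Lx.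
  destruct (HQ x Qx) as [P|P]; last by apply: (Mx2 x (conj Qx P)).
  by apply: E1; exists x.
- exfalso; destruct (HQ x0 Qx0) as [P|P]; [apply: E1|apply: E2]; by exists x0.
Qed.

Arguments union_awo {H p P1 P2}.

Lemma sharp_step (k : realFieldType) (H : PreOG) (p : car H -> car H) :
  Inv H p -> Inv (sharp_group k H) (push (ogmem H) p).
Proof.
move=> I.
have supp_mem : forall a : car H -> k, is_series H (gt1 H) a ->
   forall x, a x <> 0 -> ogmem H x /\ glt H (gone H) x.
  by move=> a [S _] x /S.
split => /=.
- split; first by move=> g /(_ erefl).
  by move=> Q HQ [x Qx]; case: (HQ x Qx).
- move=> a _ [g [_ [L _]]]; by rewrite ltxx in L.
- move=> a b c _ _ _ [g1 [M1 [L1 E1]]] [g2 [M2 [L2 E2]]].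
  destruct (i_tri I M1 M2) as [L|[L|L]].
  + exists g2; split => //; split; first by rewrite E1.
    move=> h Mh Lh; rewrite E1 ?E2 //; exact: (i_tr I M1 M2 Mh).
  + subst g2; exists g1; split => //; split; first exact: lt_trans L2.
    by move=> h Mh Lh; rewrite E1 ?E2.
  + exists g1; split => //; split; first by rewrite -E2.
    move=> h Mh Lh; rewrite E1 ?E2 //; exact: (i_tr I M2 M1 Mh).
- move=> a b Ma Mb.
  destruct (classic (a = b)) as [E|E]; first by right; left.
  have [x0 Hx0] : exists x, a x <> b x.
    apply: NNPP => N; apply: E; apply: functional_extensionality => x.
    by apply: NNPP => N'; apply: N; exists x.
  have AW := union_awo I (fun x h => proj1 (supp_mem a Ma x h))
     (fun x h => proj1 (supp_mem b Mb x h)) (proj2 Ma) (proj2 Mb).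
  have [m [Qm Mx]] : exists m, a m <> b m /\ forall x, a x <> b x -> ~ glt H m x.
    apply: (AW (fun x => a x <> b x)); last by exists x0.
    move=> x Nx; apply: NNPP => N; apply: Nx.
    have -> : a x = 0 by apply: NNPP => N1; apply: N; left.
    have -> : b x = 0 by apply: NNPP => N1; apply: N; right.
    done.
  have Mm : ogmem H m.
    destruct (classic (a m = 0)) as [E0|E0]; last exact: proj1 (supp_mem a Ma m E0).
    apply: (proj1 (supp_mem b Mb m _)); by move=> Eb; apply: Qm; rewrite E0 Eb.
  have above : forall h, ogmem H h -> glt H m h -> a h = b h.
    by move=> h _ Lh; apply: NNPP => N; apply: (Mx h N Lh).
  case: (ltgtP (a m) (b m)) => [L|L|L].
  + by left; exists m; split => //; split.
  + right; right; exists m; split => //; split => // h Mh Lh; by rewrite above.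
  + by exfalso; apply: Qm.
- move=> a Ma; split.
  + move=> y; destruct (push_cases k (ogmem H) p y) as [[x [Mx [px Ex]]]|[_ Ex]];
      rewrite Ex //.
    move=> Ax; have [_ L] := supp_mem a Ma x Ax; subst y.
    split; first exact: i_mem I _ Mx.
    rewrite -(i_p1 I); exact: i_mono I _ _ (i_one I) Mx L.
  + move=> Q HQ [y0 Qy0].
    have preim : forall y, push (ogmem H) p a y <> 0 ->
        exists x, ogmem H x /\ p x = y /\ a x <> 0.
      move=> y; destruct (push_cases k (ogmem H) p y) as [[x [Mx [px Ex]]]|[_ Ex]];
        rewrite Ex //; by exists x.
    have [x0 [Mx0 [px0 ax0]]] := preim y0 (HQ y0 Qy0).
    have Qx0 : Q (p x0) by rewrite px0.
    have [m [[Mm [am Qm]] Mxm]] := proj2 Ma (fun x => ogmem H x /\ a x <> 0 /\ Q (p x))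
        (fun x h => proj1 (proj2 h)) (ex_intro _ x0 (conj Mx0 (conj ax0 Qx0))).
    exists (p m); split => // y Qy L.
    have [x [Mx [px ax]]] := preim y (HQ y Qy); subst y.
    have Mpm := i_mem I _ Mm; have Mpx := i_mem I _ Mx.
    destruct (i_tri I Mm Mx) as [L'|[L'|L']].
    * by apply: (Mxm x (conj Mx (conj ax Qy))).
    * by subst x; apply: (i_irr I Mpm).
    * by apply: (i_irr I Mpx); apply: (i_tr I Mpx Mpm Mpx) => //; apply: i_mono.
- move=> a b Ma Mb [g [Mg [Lg Eg]]].
  have Mpg := i_mem I _ Mg.
  exists (p g); split => //; split.
  + destruct (push_cases k (ogmem H) p (p g)) as [[x [Mx [px Ex]]]|[N _]];
      last by exfalso; apply: N; exists g.
    rewrite !Ex.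
    have Mpx := i_mem I _ Mx.
    destruct (i_tri I Mx Mg) as [L'|[L'|L']]; first (exfalso; apply: (i_irr I Mpx)).
    * by rewrite {2}px; apply: i_mono.
    * by subst x.
    * exfalso; apply: (i_irr I Mpx); by rewrite {1}px; apply: i_mono.
  + move=> h Mh Lh.
    destruct (push_cases k (ogmem H) p h) as [[x [Mx [px Ex]]]|[N Ex]]; rewrite !Ex //.
    subst h; have Mpx := i_mem I _ Mx.
    destruct (i_tri I Mx Mg) as [L'|[L'|L']].
    * exfalso; apply: (i_irr I Mpx); apply: (i_tr I Mpx Mpg Mpx) => //; exact: i_mono.
    * by subst x; exfalso; apply: (i_irr I Mpx).
    * exact: Eg.
- apply: functional_extensionality => y.
  by destruct (push_cases k (ogmem H) p y) as [[x [Mx [px Ex]]]|[N Ex]]; rewrite Ex.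
- move=> a Ma [g [Mg [Lg Eg]]].
  have ag : a g <> 0 by move=> E; rewrite E ltxx in Lg.
  have [_ g1] := supp_mem a Ma g ag.
  have Mpg := i_mem I _ Mg.
  have Cg := i_con I Mg g1.
  have key : forall h, ogmem H h -> (h = g \/ glt H g h) -> push (ogmem H) p a h = 0.
    move=> h Mh Hh.
    destruct (push_cases k (ogmem H) p h) as [[x [Mx [px Ex]]]|[N Ex]]; rewrite Ex //.
    apply: NNPP => ax.
    have Mpx := i_mem I _ Mx.
    have Lpx : glt H (p x) g.
      destruct (i_tri I Mx Mg) as [L'|[L'|L']].
      * apply: (i_tr I Mpx Mpg Mg) => //; exact: i_mono.
      * by subst x.
      * by exfalso; apply: ax; rewrite -(Eg x Mx L').
    subst h; destruct Hh as [E|L'].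
    * by rewrite E in Lpx; apply: (i_irr I Mg).
    * by apply: (i_irr I Mg); apply: (i_tr I Mg Mpx Mg).
  exists g; split => //; split; first by rewrite key //; left.
  move=> h Mh Lh; rewrite key //; last by right.
  by rewrite -(Eg h Mh Lh).
Qed.

Lemma base_inv (k : realFieldType) (G : PreOG) (l : car G -> car G -> k)
  (psi : car G -> car G) :
  is_oag G -> is_morphism G l psi -> contracting G psi -> Inv G psi.
Proof.
move=> [O1 [Om [Oa [Oc [Ou [Oi [Oirr [Otr [Otri Omul]]]]]]]]] [[Pm [Ph Pmo]] _] C.
split => //.
have Mp1 := Pm _ O1.
have E : psi (gone G) = gmul G (psi (gone G)) (psi (gone G)).
  by rewrite -Ph // Ou.
have [y [My Ey]] := Oi _ Mp1.
rewrite -Ey {2}E -Oa // Ey Oc // Ou //.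
Qed.

Theorem proposition7 (k : realFieldType) (G : PreOG) (l : car G -> car G -> k)
  (psi : car G -> car G) :
  is_oag G -> is_prelog G l -> is_morphism G l psi -> contracting G psi ->
  forall (n : nat) (g : car (lvG k (tower G l n))),
    ogmem (lvG k (tower G l n)) g ->
    glt (lvG k (tower G l n)) (gone (lvG k (tower G l n))) g ->
    glt (lvG k (tower G l n)) (psi_n G l psi n g) g.
Proof.
move=> HG _ HM HC n.
have I : Inv (lvG k (tower G l n)) (psi_n G l psi n).
  elim: n => [|n IH]; first exact: base_inv HG HM HC.
  exact: (sharp_step k _ _ IH).
exact: i_con I.
Qed.
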